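(* Let $(X,\mathcal A,\mu,\mu^{\otimes2},R,I,\Pi_R,G,E_0,\eta)$ be an admissible structural model with $\eta\in[0,1)$, and assume the global decoupling condition \[\mu^{\otimes2}\big(((\Pi_R^{-1}(B)\setminus B)\times X)\cap G\big)=0\qquad\text{for all } B\in\mathcal A \text{ with } B\subseteq R.\] Then: (a) $\mu^{\otimes2}(G\setminus(R\times R))=0$, and for every $B\in\mathcal A$ with $B\subseteq R$, $\mu^{\otimes2}((B\times X)\cap G)=\mu^{\otimes2}((B\times R)\cap(G\cap(R\times R)))$; (b) for every $B\in\mathcal A$ with $B\subseteq R$, \[\mu^{\otimes2}((B\times X)\cap G)=\frac{\mu(B)}{1-\eta}.\]
   Context: For a nonempty set $X$, an algebra $\mathcal A\subseteq\mathcal P(X)$ contains $\varnothing,X$ and is closed under finite unions and complements. A finitely additive measure satisfies $\mu(\varnothing)=0$ and additivity on disjoint pairs. $\mathcal A\otimes\mathcal A$ is the algebra generated by rectangles $B_1\times B_2$, $B_i\in\mathcal A$. For relations, $H\circ K=\{(x,z):\exists y\,(x,y)\in H,(y,z)\in K\}$. A pre-structural datum is a tuple $(X,\mathcal A,\mu,\mu^{\otimes2},R,I,\Pi_R,G,E_0,\eta)$ where: $X$ nonempty; $\mathcal A$ an algebra on $X$; $\mu:\mathcal A\to[0,\infty)$ finitely additive; $\mu^{\otimes2}:\mathcal A\otimes\mathcal A\to[0,\infty)$ finitely additive with $\mu^{\otimes2}(B_1\times B_2)=\mu(B_1)\mu(B_2)$; $R,I\in\mathcal A$ disjoint; $\Pi_R:X\to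 R$ a map; $G\in\mathcal A\otimes\mathcal A$; $E_0\in(0,\infty)$; $\eta\in[0,1]$. Axiom I: $\Pi_R\circ\Pi_R=\Pi_R$, $\Pi_R(r)=r$ for $r\in R$, and $\Pi_R^{-1}(B)\in\mathcal A$ for $B\in\mathcal A$, $B\subseteq R$. Axiom II: $G$ reflexive, symmetric, $G\circ G=G$. Axiom III: (a) $\mu(R)+\mu(I)=E_0$; (b) $\mu(\Pi_R^{-1}(B))=\mu(B)$ for $B\in\mathcal A$, $B\subseteq R$; (c) for all $B\in\mathcal A$, $\mu^{\otimes2}((B\times X)\cap G)=\mu(B)+\eta\,\mu^{\otimes2}((\Pi_R^{-1}(B)\times X)\cap G)$. An admissible structural model is a pre-structural datum satisfying Axioms I–III. *)

(* Defs.v *)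
From Stdlib Require Import Reals.
Open Scope R_scope.

Definition pset (T : Type) := T -> Prop.

Section SetOps.
Context {T : Type}.
Definition sempty : pset T := fun _ => False.
Definition sfull : pset T := fun _ => True.
Definition sunion (A B : pset T) : pset T := fun x => A x \/ B x.
Definition sinter (A B : pset T) : pset T := fun x => A x /\ B x.
Definition scompl (A : pset T) : pset T := fun x => ~ A x.
Definition sdiff (A B : pset T) : pset T := fun x => A x /\ ~ B x.
Definition ssubset (A B : pset T) : Prop := forall x, A x -> B x.
Definition sdisjoint (A B : pset T) : Prop := forall x, A x -> B x -> False.
End SetOps.

Definition rect {X : Type} (B1 B2 : pset X) : pset (X * X) :=
  fun p => B1 (fst p) /\ B2 (snd p).

Definition preimage {X : Type} (f : X -> X) (B : pset X) : pset X :=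
  fun x => B (f x).

Definition is_algebra {T : Type} (A : pset (pset T)) : Prop :=
  A sempty /\ A sfull /\
  (forall B C, A B -> A C -> A (sunion B C)) /\
  (forall B, A B -> A (scompl B)).

(* Product algebra A ⊗ A: the algebra generated by rectangles B1 × B2. *)
Definition prod_algebra {X : Type} (A : pset (pset X)) : pset (pset (X * X)) :=
  fun S => forall F : pset (pset (X * X)), is_algebra F ->
    (forall B1 B2, A B1 -> A B2 -> F (rect B1 B2)) -> F S.

Definition fin_add_measure {T : Type} (A : pset (pset T)) (mu : pset T -> R) : Prop :=
  (forall B, A B -> 0 <= mu B) /\
  mu sempty = 0 /\
  (forall B C, A B -> A C -> sdisjoint B C -> mu (sunion B C) = mu B + mu C).

Definition rcomp {X : Type} (H K : pset (X * X)) : pset (X * X) :=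
  fun p => exists y, H (fst p, y) /\ K (y, snd p).

Definition pre_structural_datum {X : Type} (A : pset (pset X)) (mu : pset X -> R)
  (mu2 : pset (X * X) -> R) (Rs Is : pset X) (Pi : X -> X) (G : pset (X * X))
  (E0 eta : R) : Prop :=
  is_algebra A /\
  fin_add_measure A mu /\
  fin_add_measure (prod_algebra A) mu2 /\
  (forall B1 B2, A B1 -> A B2 -> mu2 (rect B1 B2) = mu B1 * mu B2) /\
  A Rs /\ A Is /\ sdisjoint Rs Is /\
  (forall x, Rs (Pi x)) /\              (* Pi_R : X -> R *)
  prod_algebra A G /\
  0 < E0 /\ 0 <= eta <= 1.

Definition axiom_I {X : Type} (A : pset (pset X)) (Rs : pset X) (Pi : X -> X) : Prop :=
  (forall x, Pi (Pi x) = Pi x) /\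
  (forall r, Rs r -> Pi r = r) /\
  (forall B, A B -> ssubset B Rs -> A (preimage Pi B)).

Definition axiom_II {X : Type} (G : pset (X * X)) : Prop :=
  (forall x, G (x, x)) /\
  (forall x y, G (x, y) -> G (y, x)) /\
  rcomp G G = G.

Definition axiom_III {X : Type} (A : pset (pset X)) (mu : pset X -> R)
  (mu2 : pset (X * X) -> R) (Rs Is : pset X) (Pi : X -> X) (G : pset (X * X))
  (E0 eta : R) : Prop :=
  mu Rs + mu Is = E0 /\
  (forall B, A B -> ssubset B Rs -> mu (preimage Pi B) = mu B) /\
  (forall B, A B ->
     mu2 (sinter (rect B sfull) G) =
     mu B + eta * mu2 (sinter (rect (preimage Pi B) sfull) G)).

Definition admissible_structural_model {X : Type} (A : pset (pset X))
  (mu : pset X -> R) (mu2 : pset (X * X) -> R) (Rs Is : pset X) (Pi : X -> X)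
  (G : pset (X * X)) (E0 eta : R) : Prop :=
  pre_structural_datum A mu mu2 Rs Is Pi G E0 eta /\
  axiom_I A Rs Pi /\ axiom_II G /\ axiom_III A mu mu2 Rs Is Pi G E0 eta.

(* Main.v *)
Require Import Defs.
From Stdlib Require Import Reals.
From Stdlib Require Import Lra Classical FunctionalExtensionality PropExtensionality.
Open Scope R_scope.

Lemma set_ext {T : Type} (S U : pset T) : (forall x, S x <-> U x) -> S = U.
Proof.
  intro H; apply functional_extensionality; intro x; apply propositional_extensionality; auto.
Qed.

Lemma alg_inter {T : Type} (F : pset (pset T)) B C :
  is_algebra F -> F B -> F C -> F (sinter B C).
Proof.
  intros [H0 [H1 [HU HC]]] HB HCc.
  replace (sinter B C) with (scompl (sunion (scompl B) (scompl C))).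
  { apply HC, HU; apply HC; auto. }
  apply set_ext; intro x; unfold scompl, sunion, sinter.
  split; [intro H; split; apply NNPP; tauto | tauto].
Qed.

Lemma alg_diff {T : Type} (F : pset (pset T)) B C :
  is_algebra F -> F B -> F C -> F (sdiff B C).
Proof.
  intros HF HB HCc.
  replace (sdiff B C) with (sinter B (scompl C)).
  { apply alg_inter; auto. apply HF; auto. }
  apply set_ext; intro x; unfold sdiff, sinter, scompl; tauto.
Qed.

Lemma prod_alg_alg {X : Type} (A : pset (pset X)) : is_algebra (prod_algebra A).
Proof.
  unfold prod_algebra; split; [|split; [|split]].
  - intros F HF _; apply HF.
  - intros F HF _; apply HF.
  - intros B C HB HC F HF Hr; pose proof HF as [_ [_ [HU _]]]; apply HU; [apply HB|apply HC]; auto.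
  - intros B HB F HF Hr; pose proof HF as [_ [_ [_ HC]]]; apply HC; apply HB; auto.
Qed.

Lemma prod_alg_rect {X : Type} (A : pset (pset X)) B1 B2 :
  A B1 -> A B2 -> prod_algebra A (rect B1 B2).
Proof. intros H1 H2 F HF Hr; auto. Qed.

Lemma mono {T : Type} (F : pset (pset T)) m B C :
  is_algebra F -> fin_add_measure F m -> F B -> F C -> ssubset B C -> m B <= m C.
Proof.
  intros HF [Hn [H0 Ha]] HB HC Hs.
  replace C with (sunion B (sdiff C B)).
  { rewrite Ha; auto.
    - assert (0 <= m (sdiff C B)) by (apply Hn, alg_diff; auto). lra.
    - apply alg_diff; auto.
    - intros x h1 [h2 h3]; auto. }
  apply set_ext; intro x; unfold sunion, sdiff; split.
  - intros [h|[h _]]; auto.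
  - intro h; destruct (classic (B x)); auto.
Qed.

Theorem theorem4p14 (X : Type) (x0 : X) (A : pset (pset X)) (mu : pset X -> R)
  (mu2 : pset (X * X) -> R) (Rs Is : pset X) (Pi : X -> X) (G : pset (X * X))
  (E0 eta : R) :
  admissible_structural_model A mu mu2 Rs Is Pi G E0 eta ->
  eta < 1 ->
  (forall B, A B -> ssubset B Rs ->
     mu2 (sinter (rect (sdiff (preimage Pi B) B) sfull) G) = 0) ->
  (mu2 (sdiff G (rect Rs Rs)) = 0 /\
   (forall B, A B -> ssubset B Rs ->
      mu2 (sinter (rect B sfull) G) =
      mu2 (sinter (rect B Rs) (sinter G (rect Rs Rs))))) /\
  (forall B, A B -> ssubset B Rs ->
     mu2 (sinter (rect B sfull) G) = mu B / (1 - eta)).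
Proof.
  intros [[HA [Hmu [Hmu2 [Hprod [HR [HI [HRI [HPi [HG [HE Heta]]]]]]]]]]
          [[HPP [HPr HPa]] [_ [_ [HIIc HIIIc]]]]] Heta1 Hdec.
  set (M := prod_algebra A).
  assert (HM : is_algebra M) by apply prod_alg_alg.
  assert (Hr : forall B1 B2, A B1 -> A B2 -> M (rect B1 B2)) by (intros; apply prod_alg_rect; auto).
  assert (HGM : M G) by exact HG.
  destruct HA as [HA0 [HA1 [HAU HAC]]].
  destruct Hmu2 as [Hn2 [H02 Ha2]].
  assert (HRc : A (scompl Rs)) by auto.
  assert (E1 : mu2 (sinter (rect (scompl Rs) sfull) G) = 0).
  { replace (scompl Rs) with (sdiff (preimage Pi Rs) Rs).
    - apply Hdec; auto. intros x h; exact h.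
    - apply set_ext; intro x; unfold sdiff, preimage, scompl; split; [tauto|].
      intro h; split; auto. }
  assert (Emu : mu (scompl Rs) = 0).
  { pose proof (HIIIc (scompl Rs) HRc) as H.
    replace (sinter (rect (preimage Pi (scompl Rs)) sfull) G) with (@sempty (X*X)) in H.
    - rewrite H02, E1 in H. lra.
    - apply set_ext; intros [a b]; unfold sempty, sinter, rect, preimage, scompl; simpl.
      split; [tauto|]. intros [[h _] _]. apply h, HPi. }
  assert (Z : forall S, M S -> ssubset S (rect sfull (scompl Rs)) -> mu2 S = 0).
  { intros S HS Hs.
    assert (mu2 S <= mu2 (rect sfull (scompl Rs))).
    { apply (mono M); auto. split; auto. }
    rewrite Hprod in H by auto. rewrite Emu in H.
    assert (0 <= mu2 S) by auto. lra. }
  split; [split|].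
  - replace (sdiff G (rect Rs Rs)) with
      (sunion (sinter (rect (scompl Rs) sfull) G) (sinter (rect Rs (scompl Rs)) G)).
    + rewrite Ha2.
      * rewrite E1, (Z (sinter (rect Rs (scompl Rs)) G)).
        -- lra.
        -- apply (alg_inter M); auto.
        -- intros [a b] [[_ h] _]; split; simpl; auto; exact I.
      * apply (alg_inter M); auto.
      * apply (alg_inter M); auto.
      * intros [a b] [[h _] _] [[h' _] _]; simpl in *; auto.
    + apply set_ext; intros [a b]; unfold sunion, sinter, rect, scompl, sdiff, sfull; simpl.
      split.
      * intros [[[h _] g]|[[h h'] g]]; split; tauto.
      * intros [g h]. destruct (classic (Rs a)); [right|left]; tauto.
  - intros B HB HBs.
    replace (sinter (rect B sfull) G) with
      (sunion (sinter (rect B Rs) (sinter G (rect Rs Rs))) (sinter (rect B (scompl Rs)) G)).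
    + rewrite Ha2.
      * rewrite (Z (sinter (rect B (scompl Rs)) G)).
        -- lra.
        -- apply (alg_inter M); auto.
        -- intros [a b] [[_ h] _]; split; simpl; auto; exact I.
      * apply (alg_inter M); auto. apply (alg_inter M); auto.
      * apply (alg_inter M); auto.
      * intros [a b] [[_ h] _] [[_ h'] _]; simpl in *; auto.
    + apply set_ext; intros [a b]; unfold sunion, sinter, rect, scompl, sfull; simpl.
      split.
      * intros [[[h1 h2] [g _]]|[[h h'] g]]; tauto.
      * intros [[h _] g]. destruct (classic (Rs b)); [left|right]; repeat split; auto.
  - intros B HB HBs.
    pose proof (HIIIc B HB) as H.
    assert (HPB : A (preimage Pi B)) by auto.
    replace (sinter (rect (preimage Pi B) sfull) G) with
      (sunion (sinter (rect B sfull) G) (sinter (rect (sdiff (preimage Pi B) B) sfull) G)) in H.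
    + rewrite Ha2 in H.
      * rewrite Hdec in H by auto.
        apply (Rmult_eq_reg_r (1 - eta)); [|lra].
        unfold Rdiv. rewrite Rmult_assoc, Rinv_l by lra. lra.
      * apply (alg_inter M); auto.
      * apply (alg_inter M); auto. apply Hr; auto. apply alg_diff; auto. split; auto.
      * intros [a b] [[h _] _] [[[_ h'] _] _]; simpl in *; auto.
    + apply set_ext; intros [a b]; unfold sunion, sinter, rect, sdiff, preimage, sfull; simpl.
      split.
      * intros [[[h _] g]|[[[h _] _] g]]; repeat split; auto.
        rewrite HPr; auto.
      * intros [[h _] g]. destruct (classic (B a)); [left|right]; repeat split; auto.
Qed.
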